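(* Let $V$ be a mixed lattice vector space and $p$ a mixed-monotone seminorm on $V$. Then $q(x)=p(s(x))$ defines a mixed lattice seminorm on $V$. If $p$ is a mixed-monotone norm, then $q$ is a mixed lattice norm.
   Context: A mixed lattice vector space $(V,\le,\preccurlyeq)$ is a real vector space $V$ with two partial orderings $\le$ (initial order) and $\preccurlyeq$ (specific order), each making $V$ a partially ordered vector space, with positive cones $V_p=\{x:0\le x\}$, $V_{sp}=\{x:0\preccurlyeq x\}$, such that: (1) for all $x,y$ the elements $x\curlyvee y=\min\{w: w\succcurlyeq x,\ w\ge y\}$ and $x\curlywedge y=\max\{w: w\preccurlyeq x,\ w\le y\}$ exist (min/max with respect to $\le$); (2) $x\preccurlyeq y$ implies $x\le y$; (3) $x\curlyvee y, x\curlywedge y\in V_{sp}$ whenever $x,y\in V_{sp}$. Notation: $x^u=0\curlyvee x$, $x^l=0\curlyvee(-x)$, $s(x)=x^u+x^l$. A seminorm (norm) $p$ is mixed-monotone if $0\preccurlyeq x\le y$ implies $p(x)\le p(y)$, and is a mixed lattice seminorm (norm) if $s(x)\le s(y)$ implies $p(x)\le p(y)$. *)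

(* Defs.v *)
From HB Require Import structures.
From mathcomp Require Import all_boot all_order all_algebra.
From mathcomp Require Import reals.
Set Implicit Arguments. Unset Strict Implicit. Unset Printing Implicit Defensive.
Import Order.TTheory GRing.Theory Num.Theory.
Local Open Scope ring_scope.

Section MixedLattice.
Variables (R : realType) (V : lmodType R).

Definition povs (le : V -> V -> Prop) : Prop :=
  [/\ (forall x, le x x),
      (forall x y, le x y -> le y x -> x = y),
      (forall x y z, le x y -> le y z -> le x z),
      (forall x y z, le x y -> le (x + z) (y + z)) &
      (forall (a : R) x y, 0 <= a -> le x y -> le (a *: x) (a *: y))].

(* Mixed lattice vector space (V, le, sle), where [le] is the initial order,
   [sle] the specific order, [msup x y] = x ⋎ y and [minf x y] = x ⋏ y.
   Since min/max w.r.t. le are unique, giving these operations together with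
   their characterizing property is equivalent to requiring existence. *)
Definition mixed_lattice_vector_space (le sle : V -> V -> Prop)
  (msup minf : V -> V -> V) : Prop :=
  povs le /\ povs sle /\
      (forall x y, sle x (msup x y) /\ le y (msup x y) /\
         (forall w, sle x w -> le y w -> le (msup x y) w)) /\
      (forall x y, sle (minf x y) x /\ le (minf x y) y /\
         (forall w, sle w x -> le w y -> le w (minf x y))) /\
      (forall x y, sle x y -> le x y) /\
      (forall x y, sle 0 x -> sle 0 y -> sle 0 (msup x y) /\ sle 0 (minf x y)).

Definition upart (msup : V -> V -> V) (x : V) : V := msup 0 x.
Definition lpart (msup : V -> V -> V) (x : V) : V := msup 0 (- x).
Definition sabs (msup : V -> V -> V) (x : V) : V := upart msup x + lpart msup x.

Definition seminorm (p : V -> R) : Prop :=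
  (forall x y, p (x + y) <= p x + p y) /\
  (forall (a : R) x, p (a *: x) = `|a| * p x).

Definition is_norm (p : V -> R) : Prop :=
  seminorm p /\ (forall x, p x = 0 -> x = 0).

Definition mixed_monotone (le sle : V -> V -> Prop) (p : V -> R) : Prop :=
  forall x y, sle 0 x -> le x y -> p x <= p y.

Definition mixed_lattice_prop (le : V -> V -> Prop) (msup : V -> V -> V)
  (p : V -> R) : Prop :=
  forall x y, le (sabs msup x) (sabs msup y) -> p x <= p y.

Definition mixed_lattice_seminorm le msup p :=
  seminorm p /\ mixed_lattice_prop le msup p.
Definition mixed_lattice_norm le msup p :=
  is_norm p /\ mixed_lattice_prop le msup p.

End MixedLattice.

(* Main.v *)
Require Import Defs.
From mathcomp Require Import all_boot all_order all_algebra.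
From mathcomp Require Import reals.
Import Order.TTheory GRing.Theory Num.Theory.
Local Open Scope ring_scope.

Theorem proposition4p5 (R : realType) (V : lmodType R)
  (le sle : V -> V -> Prop) (msup minf : V -> V -> V)
  (HV : mixed_lattice_vector_space le sle msup minf) (p : V -> R) :
  (seminorm p -> mixed_monotone le sle p ->
     mixed_lattice_seminorm le msup (fun x => p (sabs msup x))) /\
  (is_norm p -> mixed_monotone le sle p ->
     mixed_lattice_norm le msup (fun x => p (sabs msup x))).
Proof.
move: HV => [[leR leA leT leD leZ] [[sR sA sT sD sZ] [Hsup [Hinf [Hsle Hpos]]]]].
have upos : forall x, sle 0 (msup 0 x) := fun x => (Hsup 0 x).1.
have uge : forall x, le x (msup 0 x) := fun x => (Hsup 0 x).2.1.
have umin : forall x w, sle 0 w -> le x w -> le (msup 0 x) w :=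
  fun x => (Hsup 0 x).2.2.
have sadd : forall a b, sle 0 a -> sle 0 b -> sle 0 (a + b).
  move=> a b ha hb; apply: sT hb _; have := sD 0 a b ha; by rewrite add0r.
have ladd : forall a b c d, le a b -> le c d -> le (a + c) (b + d).
  move=> a b c d h1 h2; apply: leT (leD _ _ c h1) _.
  rewrite [b + c]addrC [b + d]addrC; exact: leD.
have spos : forall x, sle 0 (sabs msup x).
  by move=> x; apply: sadd; apply: upos.
have usub : forall x y, le (msup 0 (x + y)) (msup 0 x + msup 0 y).
  by move=> x y; apply: umin; [apply: sadd; apply: upos | apply: ladd; apply: uge].
have ssub : forall x y, le (sabs msup (x + y)) (sabs msup x + sabs msup y).
  move=> x y; rewrite /sabs /upart /lpart opprD addrACA.
  by apply: ladd; apply: usub.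
have uscale : forall c x, 0 <= c -> msup 0 (c *: x) = c *: msup 0 x.
  move=> c x; rewrite le_eqVlt => /orP [/eqP <-|hc].
    rewrite !scale0r; apply: leA; first exact: umin (sR 0) (leR 0).
    exact: Hsle (upos 0).
  have hc' : c != 0 by rewrite gt_eqF.
  have hci : 0 <= c^-1 by rewrite invr_ge0 ltW.
  apply: leA.
    apply: umin; last by apply: leZ; [exact: ltW | exact: uge].
    by have := sZ c 0 (msup 0 x) (ltW hc) (upos x); rewrite scaler0.
  have h1 : sle 0 (c^-1 *: msup 0 (c *: x)).
    by have := sZ _ 0 _ hci (upos (c *: x)); rewrite scaler0.
  have h2 : le x (c^-1 *: msup 0 (c *: x)).
    by have := leZ _ _ _ hci (uge (c *: x)); rewrite scalerA mulVf // scale1r.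
  have := leZ c _ _ (ltW hc) (umin x _ h1 h2).
  by rewrite scalerA divff // scale1r.
have snn : forall c x, 0 <= c -> sabs msup (c *: x) = c *: sabs msup x.
  move=> c x hc; rewrite /sabs /upart /lpart -scalerN !uscale //.
  by rewrite scalerDr.
have sN : forall x, sabs msup (- x) = sabs msup x.
  by move=> x; rewrite /sabs /upart /lpart opprK addrC.
have sscale : forall a x, sabs msup (a *: x) = `|a| *: sabs msup x.
  move=> a x; have [ha|ha] := leP 0 a.
    by rewrite ger0_norm // snn.
  rewrite ltr0_norm // -(opprK a) scaleNr -scalerN snn ?sN ?opprK //.
  by rewrite oppr_ge0 ltW.
have mlp : mixed_monotone le sle p ->
    mixed_lattice_prop le msup (fun x => p (sabs msup x)).
  by move=> mono x y H; apply: mono; [apply: spos | exact: H].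
have semi : seminorm p -> mixed_monotone le sle p ->
    seminorm (fun x => p (sabs msup x)).
  move=> [pT pZ] mono; split.
    move=> x y /=; apply: le_trans (mono _ _ (spos _) (ssub x y)) _.
    exact: pT.
  by move=> a x /=; rewrite sscale pZ normr_id.
split.
  by move=> hs mono; split; [exact: semi | exact: mlp].
move=> [hs pdef] mono; split; last exact: mlp.
split; first exact: semi.
move=> x /pdef; rewrite /sabs /upart /lpart => H.
have hu : msup 0 x = 0.
  apply: sA; last exact: upos.
  have := sD _ _ (msup 0 x) (upos (- x)).
  by rewrite add0r addrC H.
have hl : msup 0 (- x) = 0 by move: H; rewrite hu add0r.
have h1 : le x 0 by rewrite -hu; exact: uge.
have h2 : le (- x) 0 by rewrite -hl; exact: uge.
apply: leA => //.
by have := leD _ _ x h2; rewrite addNr add0r.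
Qed.
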